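(* Let $\mathcal Y=\{1,\dots,n\}$, $c\in(0,1)$ constant, $\mathcal H_{\rm all}$, $\mathcal R_{\rm all}$ the families of all measurable functions $\mathcal X\times\mathcal Y\to\mathbb R$ and $\mathcal X\to\mathbb R$. Let $\ell$ be a multi-class surrogate loss and $\Phi$ non-increasing with $\Phi(t)\ge1_{t\le0}$. Assume there are non-decreasing concave $\Gamma_1,\Gamma_2$ such that for all distributions, all $h\in\mathcal H_{\rm all}$ and $r\in\mathcal R_{\rm all}$: $\mathcal E_{\ell_{0-1}}(h)-\mathcal E^*_{\ell_{0-1}}(\mathcal H_{\rm all})\le\Gamma_1(\mathcal E_\ell(h)-\mathcal E^*_\ell(\mathcal H_{\rm all}))$ (distributions over $\mathcal X\times\mathcal Y$) and $\mathcal E_{\ell^{\rm binary}_{0-1}}(r)-\mathcal E^*_{\ell^{\rm binary}_{0-1}}(\mathcal R_{\rm all})\le\Gamma_2(\mathcal E_\Phi(r)-\mathcal E^*_\Phi(\mathcal R_{\rm all}))$ (distributions over $\mathcal X\times\{-1,+1\}$). Then for all $h\in\mathcal H_{\rm all}$, $r\in\mathcal R_{\rm all}$ and any distribution over $\mathcal X\times\mathcal Y$, $$\mathcal E_{\mathsf L_{\rm abs}}(h,r)-\mathcal E^*_{\mathsf L_{\rm abs}}(\mathcal H_{\rm all},\mathcal R_{\rm all})\le\Gamma_1\big(\mathcal E_\ell(h)-\mathcal E^*_\ell(\mathcal H_{\rm all})\big)+(1+c)\Gamma_2\Big(\big(\mathcal E_{\ell_{\Phi,h}}(r)-\mathcal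 E^*_{\ell_{\Phi,h}}(\mathcal R_{\rm all})\big)/c\Big),$$ where, when $\Gamma_2$ is linear, the bound holds with the constant factors $(1+c)$ and $1/c$ removed.
   Context: $\mathsf h(x)=\arg\max_y h(x,y)$ with fixed tie-breaking. $\ell_{0-1}(h,x,y)=1_{\mathsf h(x)\ne y}$; $\mathsf L_{\rm abs}(h,r,x,y)=1_{\mathsf h(x)\ne y}1_{r(x)>0}+c\,1_{r(x)\le0}$; $\ell_{\Phi,h}(r,x,y)=1_{\mathsf h(x)\ne y}\Phi(-r(x))+c\,\Phi(r(x))$. For $y\in\{-1,+1\}$: $\ell^{\rm binary}_{0-1}(r,x,y)=1_{y\ne\mathrm{sign}(r(x))}$, $\mathrm{sign}(t)=1_{t>0}-1_{t\le0}$, $\Phi$-loss $\Phi(yr(x))$. $\mathcal E$ denotes expected loss and $\mathcal E^*$ its infimum over the indicated set(s). *)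

(* Defs.v *)
From HB Require Import structures.
From mathcomp Require Import all_boot all_order all_algebra.
From mathcomp Require Import all_classical all_reals all_analysis.
Set Implicit Arguments. Unset Strict Implicit. Unset Printing Implicit Defensive.
Import Order.TTheory GRing.Theory Num.Theory.
Local Open Scope classical_set_scope.
Local Open Scope ring_scope.

(* The label set Y = {1,...,n+1} is represented by 'I_n.+1, equipped with the
   discrete sigma-algebra (all subsets measurable). *)
HB.instance Definition _ (n : nat) := isPointed.Build 'I_n.+1 ord0.
HB.instance Definition _ (n : nat) :=
  @isMeasurable.Build default_measure_display 'I_n.+1 discrete_measurable
    (@discrete_measurable0 _) (@discrete_measurableC _) (@discrete_measurableU _).

Section defs.
Context (R : realType) (d : measure_display) (X : measurableType d) (n : nat).
Local Notation Y := ('I_n.+1).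

Definition Hall : set (X * Y -> R) := [set h | measurable_fun setT h].
Definition Rall : set (X -> R) := [set r | measurable_fun setT r].

(* predictor  h(x) = argmax_y h(x,y) with a fixed tie-breaking *)
Definition hpred (h : X * Y -> R) (x : X) : Y :=
  [arg max_(y > ord0) h (x, y)]%O.

Definition loss01 (h : X * Y -> R) (x : X) (y : Y) : R :=
  (hpred h x != y)%:R.

Definition Labs (c : R) (h : X * Y -> R) (r : X -> R) (x : X) (y : Y) : R :=
  (hpred h x != y)%:R * ((0 < r x)%R : bool)%:R + c * ((r x <= 0)%R : bool)%:R.

Definition lPhih (c : R) (Phi : R -> R) (h : X * Y -> R) (r : X -> R)
  (x : X) (y : Y) : R :=
  (hpred h x != y)%:R * Phi (- r x) + c * Phi (r x).

End defs.

Section bdefs.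
Context (R : realType) (d : measure_display) (X : measurableType d).
(* binary labels {-1,+1} represented by bool: true = +1, false = -1;
   sign(t) = +1 iff t > 0 *)
Definition sgnb (t : R) : bool := 0 < t.
Definition lab_val (y : bool) : R := if y then 1 else -1.
Definition bin01 (r : X -> R) (x : X) (y : bool) : R := (y != sgnb (r x))%:R.
Definition binPhi (Phi : R -> R) (r : X -> R) (x : X) (y : bool) : R :=
  Phi (lab_val y * r x).
End bdefs.

Definition Risk (R : realType) (d1 d2 : measure_display)
  (X : measurableType d1) (Y : measurableType d2)
  (P : probability (X * Y)%type R) (f : X -> Y -> R) : \bar R :=
  (\int[P]_z (f z.1 z.2)%:E)%E.

(* excess  E - E^*  (losses are nonnegative, so E^* >= 0; when E = +oo the
   excess is +oo) *)
Definition excess (R : realType) (e s : \bar R) : \bar R :=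
  if e == +oo%E then +oo%E else (e - s)%E.

(* extension of Gamma : R -> R to the (nonnegative) extended reals,
   Gamma(+oo) = +oo, i.e. the bound is vacuous when the surrogate excess is
   infinite *)
Definition Gext (R : realType) (G : R -> R) (e : \bar R) : \bar R :=
  match e with
  | EFin r => (G r)%:E
  | +oo%E => +oo%E
  | -oo%E => -oo%E
  end.

Definition nondecr0 (R : realType) (G : R -> R) : Prop :=
  forall s t : R, 0 <= s -> s <= t -> G s <= G t.
Definition concave0 (R : realType) (G : R -> R) : Prop :=
  forall (s t l : R), 0 <= s -> 0 <= t -> 0 <= l <= 1 ->
    l * G s + (1 - l) * G t <= G (l * s + (1 - l) * t).

(* Main.v *)
Require Import Defs.
From HB Require Import structures.
From mathcomp Require Import all_boot all_order all_algebra.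
From mathcomp Require Import all_classical all_reals all_analysis.
From mathcomp Require Import measurable_realfun lebesgue_integral_nonneg.
From mathcomp Require Import ring lra.
Import Order.TTheory GRing.Theory Num.Theory.
Local Open Scope classical_set_scope.
Local Open Scope ring_scope.

Lemma mbool (R : realType) (f : bool -> R) : measurable_fun setT f.
Proof. by move=> _ B _. Qed.
Lemma mboolb (f : bool -> bool) : measurable_fun setT f.
Proof. by move=> _ B _. Qed.
Lemma b2R (R : realType) (b : bool) : (b%:R : R) = if b then 1 else 0.
Proof. by case: b. Qed.
Lemma fin_bounds (R : realType) (x : \bar R) (a b : R) :
  (a%:E <= x)%E -> (x <= b%:E)%E -> exists r, x = r%:E /\ a <= r <= b.
Proof.
case: x => [r| |] //=; rewrite ?lee_fin => ar rb; first by exists r; rewrite ar rb.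
Qed.
Arguments fin_bounds {R x a b}.

Lemma mboolR d (T : measurableType d) (R : realType) (b : T -> bool) :
  measurable_fun setT b -> measurable_fun setT (fun x => (b x)%:R : R).
Proof. by move=> mb; exact: (measurableT_comp (@mbool R (fun b : bool => b%:R : R)) mb). Qed.
Lemma mlt d (T : measurableType d) (R : realType) (f g : T -> R) :
  measurable_fun setT f -> measurable_fun setT g -> measurable_fun setT (fun x => ((f x < g x)%R : bool)%:R : R).
Proof. by move=> mf mg; apply: mboolR; apply: measurable_realfun.measurable_fun_ltr. Qed.
Lemma mle d (T : measurableType d) (R : realType) (f g : T -> R) :
  measurable_fun setT f -> measurable_fun setT g -> measurable_fun setT (fun x => ((f x <= g x)%R : bool)%:R : R).
Proof. by move=> mf mg; apply: mboolR; apply: measurable_realfun.measurable_fun_ler. Qed.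

Section meas.
Context {R : realType} {d : measure_display} {X : measurableType d} {n : nat}.
Local Notation Y := ('I_n.+1).

Definition Gsel (M : {ffun Y * Y -> bool}) : Y :=
  odflt ord0 [pick i | [forall j, M (i, j)]].

Definition cmpf (h : X * Y -> R) (x : X) : {ffun Y * Y -> bool} :=
  [ffun p => h (x, p.2) <= h (x, p.1)].

Lemma hpredE (h : X * Y -> R) x : hpred h x = Gsel (cmpf h x).
Proof.
rewrite /hpred /Gsel /Order.arg_max /extremum; congr odflt.
apply: eq_pick => i /=; apply: eq_forallb => j /=.
by rewrite ffunE.
Qed.

Lemma measurable_hpred_pre (h : X * Y -> R) (y : Y) :
  measurable_fun setT h -> measurable [set x | hpred h x = y].
Proof.
move=> mh.
have -> : [set x | hpred h x = y] =
  \bigcup_(M in [set M | Gsel M = y])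
     \bigcap_(p in [set: Y * Y]) [set x | (h (x, p.2) <= h (x, p.1)) = M p].
  apply/seteqP; split => x /=.
    move=> hx; exists (cmpf h x); first by rewrite /= -hpredE.
    by move=> p _ /=; rewrite ffunE.
  move=> [M /= GM Mx]; rewrite hpredE -GM; congr Gsel.
  by apply/ffunP => p; rewrite ffunE; apply: Mx.
apply: fin_bigcup_measurable; first exact: finite_finset.
move=> M _; apply: fin_bigcap_measurable; first exact: finite_finset.
move=> [i j] _ /=.
have mi k : measurable_fun setT (fun x : X => h (x, k)).
  apply: measurableT_comp => //; exact: measurable_pair2.
have := measurable_realfun.measurable_fun_ler (mi j) (mi i) measurableT (_ : measurable [set M (i, j)]).
by rewrite setTI; apply.
Qed.

End meas.

Lemma mnormalizeE d (T : measurableType d) (R : realType)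
  (mu : {measure set T -> \bar R}) (P : probability T R) (Z : R) A :
  mu setT = Z%:E -> 0 < Z -> 
  (mnormalize mu P A = ((Z^-1)%R)%:E * mu A)%E.
Proof.
move=> muZ Z0; rewrite /mnormalize muZ.
have -> : (Z%:E == 0%E) || (Z%:E == +oo%E) = false.
  by apply/negbTE; rewrite negb_or eqe (gt_eqF Z0).
by rewrite /= muleC.
Qed.

Lemma integral_mrestr_ge0 d (T : measurableType d) (R : realType)
  (mu : {measure set T -> \bar R}) (S : set T) (mS : measurable S)
  (g : T -> \bar R) : measurable_fun setT g -> (forall x, 0 <= g x)%E ->
  (\int[mrestr mu mS]_x g x = \int[mu]_(x in S) g x)%E.
Proof.
move=> mg g0.
have mSc : measurable (~` S) by exact: measurableC.
have -> : [set: T] = S `|` ~` S by rewrite setUv.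
rewrite ge0_integral_setU //; last 2 first.
- by rewrite setUv.
- by rewrite /disj_set setICr.
have -> : (\int[mrestr mu mS]_(x in ~` S) g x = 0)%E.
  rewrite (@eq_measure_integral _ _ _ _ mzero); first exact: integral_measure_zero.
  move=> A mA AS; change (mu (A `&` S) = 0%E).
  have -> : A `&` S = set0 by apply/seteqP; split => x // [/AS].
  exact: measure0.
rewrite adde0; apply: eq_measure_integral => A mA AS.
by change (mu (A `&` S) = mu A); congr (mu _); apply/seteqP; split => [x []//|x Ax]; split => //; apply: AS.
Qed.

Lemma Q_exists (R : realType) (d : measure_display) (X : measurableType d) (n : nat)
  (P : probability (X * 'I_n.+1)%type R) (S : set (X * 'I_n.+1)) (mS : measurable S)
  (c : R) (c0 : 0 < c) :
  exists Q : probability (X * bool)%type R,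
  forall F : X * bool -> R, (forall z, 0 <= F z) -> measurable_fun setT F ->
   (\int[Q]_z (F z)%:E = ((c + fine (P S))^-1)%:E *
       (c%:E * \int[P]_z (F (z.1, true))%:E + \int[P]_z (\1_S z * F (z.1, false))%:E))%E.
Proof.
pose phiT := fun z : X * 'I_n.+1 => (z.1, true).
pose phiF := fun z : X * 'I_n.+1 => (z.1, false).
have mphiT : measurable_fun setT phiT.
  exact: measurable_fun_pair measurable_fst (measurable_cst _).
have mphiF : measurable_fun setT phiF.
  exact: measurable_fun_pair measurable_fst (measurable_cst _).
pose muT := measure_function_pushforward__canonical__measure_function_Measure P mphiT.
pose PS := measure_function_mrestr__canonical__measure_function_Measure P mS.
pose muF := measure_function_pushforward__canonical__measure_function_Measure PS mphiF.
pose cn := NngNum (ltW c0).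
pose mu : {measure set (X * bool)%type -> \bar R} := measure_add (mscale cn muT) muF.
have PSfin : P S \is a fin_num.
  by rewrite ge0_fin_numE ?measure_ge0// (le_lt_trans (probability_le1 _ _)) ?ltry.
have PS0 : (0 <= fine (P S))%R by rewrite fine_ge0// measure_ge0.
pose Z := c + fine (P S).
have Z0 : 0 < Z by rewrite /Z ltr_wpDr.
have muT1 : mu setT = Z%:E.
  rewrite /mu /= /msum 2!big_ord_recl big_ord0 adde0 /=.
  rewrite /mscale /pushforward /mrestr /= preimage_setT setTI.
  by rewrite /pushforward preimage_setT probability_setT mule1 /Z EFinD fineK.
have Zi0 : 0 <= Z^-1 by rewrite invr_ge0 ltW.
pose zi := NngNum Zi0.
have [z0 _] : [set: X * 'I_n.+1] !=set0.
  apply/set0P/negP => /eqP h0; have := probability_setT P.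
  by rewrite h0 measure0 => /eqP; rewrite eq_sym onee_eq0.
exists (mnormalize mu (@dirac _ (X * bool)%type (z0.1, true) R)) => F F0 mF.
have mFE : measurable_fun setT (fun z => (F z)%:E) by exact/measurable_EFinP.
rewrite (@eq_measure_integral _ _ _ _ (mscale zi mu)); last first.
  by move=> A mA _; exact: (@mnormalizeE _ _ _ mu _ Z A muT1 Z0).
rewrite ge0_integral_mscale //; last by move=> z _; rewrite lee_fin.
congr (_ * _)%E.
rewrite /mu ge0_integral_measure_add //; last by move=> z _; rewrite lee_fin.
rewrite ge0_integral_mscale //; last by move=> z _; rewrite lee_fin.
congr (_ * _ + _)%E.
  by rewrite ge0_integral_pushforward //; move=> z _; rewrite lee_fin.
rewrite ge0_integral_pushforward //; last by move=> z _; rewrite lee_fin.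
rewrite preimage_setT integral_mrestr_ge0 //; last 2 first.
- exact: (measurableT_comp mFE mphiF).
- by move=> z; rewrite lee_fin.
rewrite integral_mkcond; apply: eq_integral => z _.
rewrite /patch indicE; case: ifPn => zS /=.
  by rewrite mul1r.
by rewrite mul0r.
Qed.

Section main.
Context {R : realType} {d : measure_display} {X : measurableType d} {n : nat}.
Local Notation Y := ('I_n.+1).

Definition Sset (h : X * Y -> R) : set (X * Y) := [set z | hpred h z.1 != z.2].

Lemma measurable_S (h : X * Y -> R) : measurable_fun setT h -> measurable (Sset h).
Proof.
move=> mh.
have -> : Sset h = \bigcup_(y in [set: Y]) (~` [set x | hpred h x = y] `*` [set y]).
  apply/seteqP; split => [[x y] /= hxy|[x y] [y' _] /= [hx ->]].
    by exists y => //; split => //=; apply/eqP.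
  by apply/eqP.
apply: fin_bigcup_measurable; first exact: finite_finset.
move=> y _; apply: measurableX; last by [].
exact/measurableC/measurable_hpred_pre.
Qed.

Lemma indicS (h : X * Y -> R) x y : (\1_(Sset h) (x, y) : R) = (hpred h x != y)%:R.
Proof.
rewrite indicE; case: (boolP (hpred h x != y)) => H.
  by rewrite (mem_set (H : Sset h (x, y))).
by rewrite memNset //= => H'; move/negP: H; apply.
Qed.


Lemma mpos (g : X -> R) : measurable_fun setT g ->
  measurable_fun setT (fun z : X * Y => ((0 < g z.1)%R : bool)%:R : R).
Proof.
move=> mg; have H := @mlt _ _ R (fun _ => 0) g (measurable_cst _) mg.
exact: (measurableT_comp H measurable_fst).
Qed.

Lemma mnpos (g : X -> R) : measurable_fun setT g ->
  measurable_fun setT (fun z : X * Y => ((g z.1 <= 0)%R : bool)%:R : R).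
Proof.
move=> mg; have H := @mle _ _ R g (fun _ => 0) mg (measurable_cst _).
exact: (measurableT_comp H measurable_fst).
Qed.

Lemma mloss01 (h : X * Y -> R) : measurable_fun setT h ->
  measurable_fun setT (fun z : X * Y => loss01 h z.1 z.2).
Proof.
move=> mh.
have -> : (fun z : X * Y => loss01 h z.1 z.2) = \1_(Sset h).
  by apply/funext => -[x y]; rewrite indicS.
by apply: measurable_indic; exact: measurable_S.
Qed.

Lemma LabsE (c : R) (h : X * Y -> R) (g : X -> R) x y : Labs c h g x y =
  \1_(Sset h) (x, y) * ((0 < g x)%R : bool)%:R + c * ((g x <= 0)%R : bool)%:R.
Proof. by rewrite indicS. Qed.

Lemma mLabs (c : R) (h : X * Y -> R) (g : X -> R) : measurable_fun setT h -> measurable_fun setT g ->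
  measurable_fun setT (fun z : X * Y => Labs c h g z.1 z.2).
Proof.
move=> mh mg.
have -> : (fun z : X * Y => Labs c h g z.1 z.2) = (fun z =>
  \1_(Sset h) z * ((0 < g z.1)%R : bool)%:R + c * ((g z.1 <= 0)%R : bool)%:R).
  by apply/funext => -[x y]; rewrite LabsE.
apply: measurable_funD; apply: measurable_funM.
- by apply: measurable_indic; exact: measurable_S.
- exact: mpos.
- exact: measurable_cst.
- exact: mnpos.
Qed.

Lemma risk_ub (P : probability (X * Y)%type R) (f : X -> Y -> R) (B : R) :
  (forall x y, 0 <= f x y <= B) ->
  measurable_fun setT (fun z : X * Y => f z.1 z.2) ->
  (0 <= Risk P f)%E /\ (Risk P f <= B%:E)%E.
Proof.
move=> hf mf.
have mfE : measurable_fun setT (fun z : X * Y => (f z.1 z.2)%:E).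
  exact/measurable_EFinP.
split.
  by apply: integral_ge0 => z _; rewrite lee_fin; case/andP: (hf z.1 z.2).
rewrite /Risk.
have -> : B%:E = (\int[P]_z (cst B%:E) z)%E.
  rewrite integral_cst //; rewrite -[LHS]mule1; congr (_ * _)%E; exact/esym/probability_setT.
apply: ge0_le_integral => //.
all: try (by move=> z _ /=; rewrite lee_fin; case/andP: (hf z.1 z.2)).
Qed.

Lemma bool_bound (c : R) (b1 b2 b3 : bool) : 0 < c ->
  0 <= b1%:R * b2%:R + c * b3%:R <= 1 + c.
Proof.
move=> c0; rewrite !b2R; apply/andP; split;
  case: b1; case: b2; case: b3 => /=; lra.
Qed.


Lemma Qrisk (P : probability (X * Y)%type R) (h : X * Y -> R) (c : R)
  (Phi : R -> R) : measurable_fun setT h -> 0 < c ->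
  measurable_fun setT Phi -> (forall t, 0 <= Phi t) ->
  exists Q : probability (X * bool)%type R,
  (forall g : X -> R, measurable_fun setT g ->
    Risk Q (bin01 g) = (((c + fine (P (Sset h)))^-1)%:E * Risk P (Labs c h g))%E) /\
  (forall g : X -> R, measurable_fun setT g ->
    Risk Q (binPhi Phi g) =
      (((c + fine (P (Sset h)))^-1)%:E * Risk P (lPhih c Phi h g))%E).
Proof.
move=> mh c0 mPhi Phi0; have [Q HQ] := @Q_exists R d X n P _ (measurable_S _ mh) c c0.
have key : forall a b : X -> R, (forall x, 0 <= a x) -> (forall x, 0 <= b x) ->
    measurable_fun setT a -> measurable_fun setT b ->
  (\int[Q]_z (((z.2 : bool)%:R * b z.1 + (~~ z.2)%:R * a z.1)%:E) =
   ((c + fine (P (Sset h)))^-1)%:E *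
     \int[P]_z ((\1_(Sset h) z * a z.1 + c * b z.1)%:E))%E.
  move=> a b a0 b0 ma mb.
  have mF : measurable_fun setT
      (fun z : X * bool => (z.2%:R * b z.1 + (~~ z.2)%:R * a z.1)).
    apply: measurable_funD; apply: measurable_funM.
    - exact: (measurableT_comp (@mbool R (fun b : bool => b%:R)) measurable_snd).
    - exact: (measurableT_comp mb measurable_fst).
    - exact: (measurableT_comp (@mbool R (fun b : bool => (~~ b)%:R)) measurable_snd).
    - exact: (measurableT_comp ma measurable_fst).
  rewrite HQ //; last first.
    move=> [x []]; rewrite /= ?b2R /= ?mul1r ?mul0r ?addr0 ?add0r; [exact: b0|exact: a0].
  congr (_ * _)%E.
  have mS := measurable_S _ mh.
  have mIa : measurable_fun setT (fun z : X * Y => \1_(Sset h) z * a z.1).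
    apply: measurable_funM; first exact: measurable_indic.
    exact: (measurableT_comp ma measurable_fst).
  have mb1 : measurable_fun setT (fun z : X * Y => b z.1).
    exact: (measurableT_comp mb measurable_fst).
  rewrite (eq_integral (fun z => (b z.1)%:E)); last first.
    by move=> z _ /=; rewrite ?b2R /= ?mul1r ?mul0r ?addr0.
  rewrite [X in (_ + X)%E](eq_integral (fun z => (\1_(Sset h) z * a z.1)%:E)); last first.
    by move=> z _ /=; rewrite ?b2R /= ?mul0r ?add0r ?mul1r.
  rewrite [RHS](eq_integral (fun z => (\1_(Sset h) z * a z.1)%:E + (c%:E * (b z.1)%:E)))%E; last first.
    by move=> z _; rewrite EFinD EFinM.
  rewrite ge0_integralD //; last 4 first.
  - by move=> z _; rewrite lee_fin mulr_ge0 // indicE.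
  - exact/measurable_EFinP.
  - by move=> z _; rewrite lee_fin mulr_ge0 // ltW.
  - apply/measurable_EFinP; apply: measurable_funM => //; exact: measurable_cst.
  rewrite ge0_integralZl_EFin //; last 3 first.
  - by move=> z _; rewrite lee_fin.
  - exact/measurable_EFinP.
  - exact: ltW.
  by rewrite addeC.
exists Q; split => g mg.
  rewrite /Risk (eq_integral (fun z => (((z.2 : bool)%:R * ((g z.1 <= 0)%R : bool)%:R
      + (~~ z.2)%:R * ((0 < g z.1)%R : bool)%:R)%:E))); last first.
    move=> [x []] _ /=; rewrite /bin01 /sgnb !b2R /=;
      by case: ltrP => _ /=; rewrite ?mul1r ?mul0r ?addr0 ?add0r.
  rewrite (key (fun x => ((0 < g x)%R : bool)%:R) (fun x => ((g x <= 0)%R : bool)%:R)) //; last 2 first.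
  - by have := @mlt _ _ R (fun _ => 0) g (measurable_cst _) mg.
  - by have := @mle _ _ R g (fun _ => 0) mg (measurable_cst _).
  congr (_ * _)%E; apply: eq_integral => -[x y] _ /=.
  by rewrite LabsE.
rewrite /Risk (eq_integral (fun z => (((z.2 : bool)%:R * Phi (g z.1)
    + (~~ z.2)%:R * Phi (- g z.1))%:E))); last first.
  by move=> [x []] _; rewrite /binPhi /lab_val /= ?b2R /= ?mul1r ?mul0r ?addr0 ?add0r ?mulN1r ?mul1r.
rewrite (key (fun x => Phi (- g x)) (fun x => Phi (g x))) //; last 2 first.
- exact: (measurableT_comp mPhi (measurable_funN mg)).
- exact: (measurableT_comp mPhi mg).
congr (_ * _)%E; apply: eq_integral => -[x y] _ /=.
by rewrite /lPhih indicS.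
Qed.


Lemma claimA (P : probability (X * Y)%type R) (c : R) (c0 : 0 < c)
  (h h' : X * Y -> R) (r' : X -> R) :
  measurable_fun setT h -> measurable_fun setT h' -> measurable_fun setT r' ->
  exists h'' : X * Y -> R, measurable_fun setT h'' /\
   (Risk P (Labs c h r') + Risk P (loss01 h'') =
    Risk P (loss01 h) + Risk P (Labs c h' r'))%E.
Proof.
move=> mh mh' mr'.
pose h'' := fun z : X * Y => ((0 < r' z.1)%R : bool)%:R * h' z +
                             ((r' z.1 <= 0)%R : bool)%:R * h z.
have mh'' : measurable_fun setT h''.
  apply: measurable_funD; apply: measurable_funM => //.
  - exact: mpos.
  - exact: mnpos.
have hp x : hpred h'' x = if (0 < r' x)%R then hpred h' x else hpred h x.
  rewrite /hpred /h'' /=; case: ltrP => H /=; congr (Order.arg_max _ _ _);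
    by apply/funext => y; rewrite ?b2R /= ?mul1r ?mul0r ?addr0 ?add0r.
exists h''; split => //.
have m1 := mLabs c _ _ mh mr'.
have m2 := mloss01 _ mh''.
have m3 := mloss01 _ mh.
have m4 := mLabs c _ _ mh' mr'.
rewrite /Risk -ge0_integralD //; last 4 first.
- by move=> z _; rewrite lee_fin; case/andP: (bool_bound c (hpred h z.1 != z.2) (0 < r' z.1)%R (r' z.1 <= 0)%R c0).
- exact/measurable_EFinP.
- by move=> z _; rewrite lee_fin /loss01 b2R; case: ifP.
- exact/measurable_EFinP.
rewrite -ge0_integralD //; last 4 first.
- by move=> z _; rewrite lee_fin /loss01 b2R; case: ifP.
- exact/measurable_EFinP.
- by move=> z _; rewrite lee_fin; case/andP: (bool_bound c (hpred h' z.1 != z.2) (0 < r' z.1)%R (r' z.1 <= 0)%R c0).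
- exact/measurable_EFinP.
apply: eq_integral => -[x y] _ /=; rewrite -!EFinD; congr EFin.
rewrite /Labs /loss01 hp; case: ltrP => H /=; rewrite ?b2R;
  case: (hpred h x != y); case: (hpred h' x != y) => /=; lra.
Qed.

End main.

Lemma excessE (R : realType) (x : R) (s : \bar R) : excess x%:E s = (x%:E - s)%E.
Proof. by []. Qed.

Lemma fin_ge0 (R : realType) (x : \bar R) : (0 <= x)%E -> x != +oo%E ->
  exists r, x = r%:E /\ 0 <= r.
Proof. by case: x => [r| |] //=; rewrite lee_fin => r0 _; exists r. Qed.
Arguments fin_ge0 {R x}.

Theorem corollary7 (R : realType) (d : measure_display) (X : measurableType d)
  (n : nat) (c : R) (hc : 0 < c < 1)
  (ell : (X * 'I_n.+1 -> R) -> X -> 'I_n.+1 -> R)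
  (ell_ge0 : forall h x y, 0 <= ell h x y)
  (ell_meas : forall h, Hall h ->
     measurable_fun setT (fun z : X * 'I_n.+1 => ell h z.1 z.2))
  (Phi : R -> R)
  (Phi_noninc : forall s t : R, s <= t -> Phi t <= Phi s)
  (Phi_ge : forall t : R, ((t <= 0)%R : bool)%:R <= Phi t)
  (G1 G2 : R -> R)
  (G1_nd : nondecr0 G1) (G1_cc : concave0 G1)
  (G2_nd : nondecr0 G2) (G2_cc : concave0 G2)
  (H1 : forall (P : probability (X * 'I_n.+1)%type R) (h : X * 'I_n.+1 -> R),
     Hall h ->
     (excess (Risk P (loss01 h))
        (ereal_inf [set Risk P (loss01 g) | g in @Hall R d X n])
      <= Gext G1 (excess (Risk P (ell h))
                    (ereal_inf [set Risk P (ell g) | g in @Hall R d X n])))%E)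
  (H2 : forall (Q : probability (X * bool)%type R) (r : X -> R),
     Rall r ->
     (excess (Risk Q (bin01 r))
        (ereal_inf [set Risk Q (bin01 g) | g in @Rall R d X])
      <= Gext G2 (excess (Risk Q (binPhi Phi r))
                    (ereal_inf [set Risk Q (binPhi Phi g) | g in @Rall R d X])))%E) :
  forall (P : probability (X * 'I_n.+1)%type R)
         (h : X * 'I_n.+1 -> R) (r : X -> R),
    Hall h -> Rall r ->
    let exLabs := excess (Risk P (Labs c h r))
        (ereal_inf [set Risk P (Labs c hr.1 hr.2) | hr in @Hall R d X n `*` @Rall R d X]) in
    let exell := excess (Risk P (ell h))
        (ereal_inf [set Risk P (ell g) | g in @Hall R d X n]) in
    let exPhi := excess (Risk P (lPhih c Phi h r))
        (ereal_inf [set Risk P (lPhih c Phi h g) | g in @Rall R d X]) in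
    (exLabs <= Gext G1 exell + (1 + c)%:E * Gext G2 (exPhi * (c^-1)%:E))%E
    /\
    ((exists a : R, forall t : R, 0 <= t -> G2 t = a * t) ->
     (exLabs <= Gext G1 exell + Gext G2 exPhi)%E).
Proof.
move=> P h r mh mr exLabs exell exPhi.
rewrite /exLabs /exell /exPhi; clear exLabs exell exPhi.
have c0 : 0 < c by case/andP: hc.
have Phi0 : forall t, 0 <= Phi t.
  by move=> t; apply: le_trans (Phi_ge t); exact: ler0n.
have mPhi : measurable_fun setT Phi.
  by apply: nonincreasing_measurable => // s t; exact: Phi_noninc.
have LbG : forall h' g, Hall h' -> Rall g ->
    (0 <= Risk P (Labs c h' g))%E /\ (Risk P (Labs c h' g) <= (1 + c)%:E)%E.
  move=> h' g mh' mg; apply: risk_ub; last exact: mLabs.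
  by move=> x y; exact: bool_bound.
have E01b : forall h', Hall h' ->
    (0 <= Risk P (loss01 h'))%E /\ (Risk P (loss01 h') <= 1%:E)%E.
  move=> h' mh'; apply: risk_ub; last exact: mloss01.
  by move=> x y; rewrite /loss01 b2R; case: ifP => _; apply/andP; split; lra.
have PhiR0 : forall g, (0 <= Risk P (lPhih c Phi h g))%E.
  move=> g; apply: integral_ge0 => z _; rewrite lee_fin /lPhih.
  by apply: addr_ge0; apply: mulr_ge0 => //; exact: ltW.
pose Lall := ereal_inf [set Risk P (Labs c hr.1 hr.2) | hr in @Hall R d X n `*` @Rall R d X].
pose IL := ereal_inf [set Risk P (Labs c h g) | g in @Rall R d X].
pose E01 := Risk P (loss01 h).
pose I01 := ereal_inf [set Risk P (loss01 g) | g in @Hall R d X n].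
have [rl [RLE rlb]] := fin_bounds (LbG h r mh mr).1 (LbG h r mh mr).2.
have LallR : (Lall <= Risk P (Labs c h r))%E.
  by apply: ereal_inf_lbound; exists (h, r).
have Lall0 : (0 <= Lall)%E.
  by apply: le_ereal_inf_tmp => _ [[h' g] [/= mh' mg] <-]; exact: (LbG h' g mh' mg).1.
have [lall [LallE lallb]] := fin_bounds Lall0 (le_trans LallR (LbG h r mh mr).2).
have lallrl : lall <= rl by move: LallR; rewrite LallE RLE lee_fin.
have ILR : (IL <= Risk P (Labs c h r))%E.
  by apply: ereal_inf_lbound; exists r.
have IL0 : (0 <= IL)%E.
  by apply: le_ereal_inf_tmp => _ [g mg <-]; exact: (LbG h g mh mg).1.
have [il [ILE ilb]] := fin_bounds IL0 (le_trans ILR (LbG h r mh mr).2).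
have [e01 [E01E e01b]] := fin_bounds (E01b h mh).1 (E01b h mh).2.
have I01R : (I01 <= E01)%E by apply: ereal_inf_lbound; exists h.
have I010 : (0 <= I01)%E.
  by apply: le_ereal_inf_tmp => _ [g mg <-]; exact: (E01b g mg).1.
have [i01 [I01E i01b]] := fin_bounds I010 (le_trans I01R (E01b h mh).2).
have i01e01 : i01 <= e01 by move: I01R; rewrite I01E /E01 E01E lee_fin.
have claim : il + i01 <= e01 + lall.
  have : ((il + i01 - e01)%:E <= Lall)%E.
    apply: le_ereal_inf_tmp => _ [[h' r'] [/= mh' mr'] <-].
    have [h'' [mh'' Heq]] := claimA P c c0 h h' r' mh mh' mr'.
    have [l1 [L1E _]] := fin_bounds (LbG h r' mh mr').1 (LbG h r' mh mr').2.
    have [l2 [L2E _]] := fin_bounds (LbG h' r' mh' mr').1 (LbG h' r' mh' mr').2.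
    have [l3 [L3E _]] := fin_bounds (E01b h'' mh'').1 (E01b h'' mh'').2.
    have il1 : il <= l1.
      have : (IL <= Risk P (Labs c h r'))%E by apply: ereal_inf_lbound; exists r'.
      by rewrite ILE L1E lee_fin.
    have i013 : i01 <= l3.
      have : (I01 <= Risk P (loss01 h''))%E by apply: ereal_inf_lbound; exists h''.
      by rewrite I01E L3E lee_fin.
    move: Heq; rewrite L1E L2E L3E E01E -!EFinD => -[Heq].
    rewrite lee_fin; lra.
  by rewrite LallE lee_fin => H; lra.
have [Q [HQ1 HQ2]] := Qrisk P h c Phi mh c0 mPhi Phi0.
have PSE : P (Sset h) = Risk P (loss01 h).
  rewrite /Risk (eq_integral (fun z => (\1_(Sset h) z)%:E)); last first.
    by move=> -[x y] _; rewrite indicS.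
  by rewrite integral_indic ?setIT //; exact: measurable_S.
rewrite PSE E01E /= in HQ1 HQ2.
pose Z := c + e01.
have Z0 : 0 < Z by rewrite /Z; lra.
have Zc : c <= Z by rewrite /Z; lra.
have Z1 : Z <= 1 + c by rewrite /Z; lra.
have Zi0 : 0 <= Z^-1 by rewrite invr_ge0 ltW.
pose IQ01 := ereal_inf [set Risk Q (bin01 g) | g in @Rall R d X].
have RQ01E : Risk Q (bin01 r) = (Z^-1 * rl)%:E by rewrite HQ1 // RLE -EFinM.
have IQ01R : (IQ01 <= Risk Q (bin01 r))%E by apply: ereal_inf_lbound; exists r.
have IQ010 : (0 <= IQ01)%E.
  apply: le_ereal_inf_tmp => _ [g mg <-]; rewrite HQ1 //.
  by apply: mule_ge0; [rewrite lee_fin | exact: (LbG h g mh mg).1].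
have [iq01 [IQ01E iq01b]] : exists iq01, IQ01 = iq01%:E /\ 0 <= iq01 <= Z^-1 * rl.
  by apply: fin_bounds => //; rewrite -RQ01E.
have Ziq : Z * iq01 <= il.
  have : ((Z * iq01)%:E <= IL)%E.
    apply: le_ereal_inf_tmp => _ [g mg <-].
    have : (IQ01 <= Risk Q (bin01 g))%E by apply: ereal_inf_lbound; exists g.
    have [lg [LgE _]] := fin_bounds (LbG h g mh mg).1 (LbG h g mh mg).2.
    rewrite IQ01E HQ1 // LgE -EFinM !lee_fin => H.
    have := ler_wpM2l (ltW Z0) H.
    by rewrite mulrA mulfV ?mul1r // gt_eqF.
  by rewrite ILE lee_fin.
have wE : rl = Z * (Z^-1 * rl) by rewrite mulrA mulfV ?mul1r // gt_eqF.
pose REl := Risk P (ell h).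
pose IEl := ereal_inf [set Risk P (ell g) | g in @Hall R d X n].
have REl0 : (0 <= REl)%E by apply: integral_ge0 => z _; rewrite lee_fin.
have IEl0 : (0 <= IEl)%E.
  by apply: le_ereal_inf_tmp => _ [g mg <-]; apply: integral_ge0 => z _; rewrite lee_fin.
have IElR : (IEl <= REl)%E by apply: ereal_inf_lbound; exists h.
have exellC : excess REl IEl = +oo%E \/
    exists el, excess REl IEl = el%:E /\ 0 <= el.
  have [HE|HE] := eqVneq REl +oo%E; first by left; rewrite /excess HE eqxx.
  right; have [rel [RElE rel0]] := fin_ge0 REl0 HE.
  have IElR' : (IEl <= rel%:E)%E by rewrite -RElE.
  have [iel [IElE ielb]] := fin_bounds IEl0 IElR'.
  exists (rel - iel); rewrite RElE excessE IElE -EFinB; split => //; lra.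
have H1' : (excess E01 I01 <= Gext G1 (excess REl IEl))%E := H1 P h mh.
rewrite /E01 E01E I01E excessE -EFinB in H1'.
pose RPh := Risk P (lPhih c Phi h r).
pose IPh := ereal_inf [set Risk P (lPhih c Phi h g) | g in @Rall R d X].
have IPh0 : (0 <= IPh)%E by apply: le_ereal_inf_tmp => _ [g mg <-]; exact: PhiR0.
have IPhR : (IPh <= RPh)%E by apply: ereal_inf_lbound; exists r.
pose IQP := ereal_inf [set Risk Q (binPhi Phi g) | g in @Rall R d X].
have H2' : (excess (Risk Q (bin01 r)) IQ01 <=
   Gext G2 (excess (Risk Q (binPhi Phi r)) IQP))%E := H2 Q r mr.
rewrite RQ01E IQ01E excessE -EFinB in H2'.
rewrite -/Lall -/RPh -/IPh -/REl -/IEl RLE excessE LallE -EFinB.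
have [RPoo|RPfin] := eqVneq RPh +oo%E.
  have Gne : Gext G1 (excess REl IEl) != -oo%E.
    by case: exellC => [->|[el [-> _]]].
  rewrite /excess RPoo eqxx gt0_mulye ?lte_fin ?invr_gt0 //= gt0_muley ?lte_fin; last lra.
  by rewrite addey // leey.
have [rp [RPE rp0]] := fin_ge0 (PhiR0 r) RPfin.
have IPhR' : (IPh <= rp%:E)%E by rewrite -RPE.
have [ip [IPE ipb]] := fin_bounds IPh0 IPhR'.
rewrite /RPh RPE excessE IPE -EFinB -EFinM /=.
have RQPE : Risk Q (binPhi Phi r) = (Z^-1 * rp)%:E by rewrite HQ2 // RPE -EFinM.
have IQPR : (IQP <= Risk Q (binPhi Phi r))%E by apply: ereal_inf_lbound; exists r.
have IQP0 : (0 <= IQP)%E.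
  by apply: le_ereal_inf_tmp => _ [g mg <-]; rewrite HQ2 //; apply: mule_ge0; rewrite ?lee_fin.
have [iqp [IQPE iqpb]] : exists iqp, IQP = iqp%:E /\ 0 <= iqp <= Z^-1 * rp.
  by apply: fin_bounds => //; rewrite -RQPE.
have ipiqp : Z^-1 * ip <= iqp.
  have : ((Z^-1 * ip)%:E <= IQP)%E.
    apply: le_ereal_inf_tmp => _ [g mg <-]; rewrite HQ2 // EFinM.
    apply: lee_wpmul2l; first by rewrite lee_fin.
    by rewrite -IPE; apply: ereal_inf_lbound; exists g.
  by rewrite IQPE lee_fin.
rewrite RQPE IQPE excessE -EFinB /= in H2'.
rewrite lee_fin in H2'.
pose u := Z^-1 * rp - iqp.
have u0 : 0 <= u by rewrite /u; case/andP: iqpb => _; lra.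
have uZ : Z * u <= rp - ip.
  rewrite /u mulrBr mulrA mulfV ?mul1r ?gt_eqF //.
  have := ler_wpM2l (ltW Z0) ipiqp; rewrite mulrA mulfV ?mul1r ?gt_eqF //; lra.
have G2u0 : 0 <= G2 u.
  apply: le_trans H2'; case/andP: iq01b => _; lra.
have Zw : rl - il <= Z * G2 u.
  have := ler_wpM2l (ltW Z0) H2'; rewrite mulrBr -wE; lra.
have rpip : 0 <= rp - ip by case/andP: ipb => _; lra.
case: exellC => [Eoo|[el [ElE el0]]].
  rewrite Eoo /=; split; last by move=> _; rewrite addye // leey.
  by rewrite addye // leey.
rewrite ElE /= in H1' *.
rewrite lee_fin in H1'.
split.
  rewrite -EFinD lee_fin.
  have uc : u <= (rp - ip) * c^-1.
    rewrite ler_pdivlMr //.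
    apply: le_trans uZ; rewrite mulrC; apply: ler_wpM2r => //.
  have G2uv := G2_nd _ _ u0 uc.
  have : Z * G2 u <= (1 + c) * G2 ((rp - ip) * c^-1).
    apply: (@le_trans _ _ (Z * G2 ((rp - ip) * c^-1))).
      by apply: ler_wpM2l => //; exact: ltW.
    apply: ler_wpM2r => //; exact: le_trans G2uv.
  lra.
move=> [a Ha]; rewrite lee_fin Ha // Ha // in Zw *.
have a0 : 0 <= a.
  have := G2_nd 0 1 (lexx 0) ler01; rewrite !Ha ?ler01 // mulr0 mulr1 => //.
have : Z * (a * u) <= a * (rp - ip).
  rewrite mulrCA; apply: ler_wpM2l => //.
lra.
Qed.
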